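(* Let $\mathbb{L}=(\mathcal{P},\mathcal{C},\parallel)$ be a miquelian Laguerre plane of characteristic $2$. If $K,L,M$ are circles, $p$ is a point with $p\in K$ and $p\in L$, and each of $K$ and $L$ is tangent to $M$, then $K$ and $L$ are tangent at $p$.
   Context: A Laguerre plane is a triple $(\mathcal{P},\mathcal{C},\parallel)$ where $\mathcal{P}$ is a set of points, $\mathcal{C}\subset 2^{\mathcal{P}}$ a set of circles and $\parallel$ an equivalence relation on $\mathcal{P}$ (parallelism; its classes are called generators) such that: (1) any three pairwise non-parallel points lie on a unique circle; (2) for every circle $K$ and non-parallel points $p\in K$, $q\notin K$ there is exactly one circle $L$ with $q\in L$ and $K\cap L=\{p\}$; (3) for every point $p$ and circle $K$ there is exactly one point $q\in K$ with $q\parallel p$; (4) some circle contains at least three but not all points. Circles $K,L$ are tangent at $p$ if $K\cap L=\{p\}$ or $K=L$ (with $p\in K$); $K$ and $L$ are tangent if they are tangent at some point. A quadruple $(a,b,c,d)$ of points is concyclic, written $(a,b,c,d)_{\triangle}$, if $a,b,c,d$ lie on a common circle, or $a\parallel b$, $c\parallel d$ and $a\nparallel c$. The plane is miquelian if it satisfies Miquel's condition: for any eight distinct points $a,b,c,d,e,f,g,h$, the relations $(a,c,b,d)_{\triangle}$, $(a,e,b,h)_{\triangle}$, $(a,g,d,h)_{\triangle}$, $(b,f,c,e)_{\triangle}$, $(c,g,d,f)_{\triangle}$ imply $(e,g,f,h)_{\triangle}$. Miquelian Laguerre planes are exactly the classical ones over commutative fields $F$ (plane sections of a quadratic cone in the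 projective space over $F$); the characteristic of the plane is the characteristic of $F$. *)

(* Defs.v *)
From Stdlib Require List.
From HB Require Import structures.
From mathcomp Require Import all_boot all_algebra.
Set Implicit Arguments. Unset Strict Implicit. Unset Printing Implicit Defensive.
Import GRing.Theory.
Local Open Scope ring_scope.

(* An incidence structure (P, C, par): points of type P, circles are subsets
   of P (predicates) belonging to the set C, par is the parallelism. *)
Section Laguerre.
Variables (P : Type) (C : (P -> Prop) -> Prop) (par : P -> P -> Prop).

Record laguerre_plane : Prop := {
  par_refl : forall p, par p p;
  par_sym : forall p q, par p q -> par q p;
  par_trans : forall p q r, par p q -> par q r -> par p r;
  lp_join : forall a b c, ~ par a b -> ~ par a c -> ~ par b c ->
    (exists K, C K /\ K a /\ K b /\ K c) /\
    (forall K L, C K -> K a -> K b -> K c -> C L -> L a -> L b -> L c -> K = L);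
  lp_touch : forall K p q, C K -> K p -> ~ K q -> ~ par p q ->
    (exists L, C L /\ L q /\ (forall x, K x /\ L x <-> x = p)) /\
    (forall L1 L2, C L1 -> L1 q -> (forall x, K x /\ L1 x <-> x = p) ->
                   C L2 -> L2 q -> (forall x, K x /\ L2 x <-> x = p) -> L1 = L2);
  lp_proj : forall p K, C K ->
    (exists q, K q /\ par q p) /\
    (forall q1 q2, K q1 -> par q1 p -> K q2 -> par q2 p -> q1 = q2);
  lp_rich : exists K, C K /\
    (exists a b c, K a /\ K b /\ K c /\ a <> b /\ a <> c /\ b <> c) /\
    (exists x, ~ K x)
}.

Definition concyclic (a b c d : P) : Prop :=
  (exists K, C K /\ K a /\ K b /\ K c /\ K d) \/
  (par a b /\ par c d /\ ~ par a c).

Definition miquelian : Prop :=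
  forall a b c d e f g h : P,
    List.NoDup [:: a; b; c; d; e; f; g; h] ->
    concyclic a c b d -> concyclic a e b h -> concyclic a g d h ->
    concyclic b f c e -> concyclic c g d f -> concyclic e g f h.

Definition tangent_at (K L : P -> Prop) (p : P) : Prop :=
  K p /\ L p /\ (K = L \/ (forall x, K x /\ L x -> x = p)).

Definition tangent (K L : P -> Prop) : Prop := exists p, tangent_at K L p.

End Laguerre.

(* The classical (miquelian) Laguerre plane over a commutative field F:
   points (F \cup {oo}) x F, with (None, y) the points over oo; circles are
   the graphs of x |-> a x^2 + b x + c extended by the point (oo, a);
   parallel points have the same first coordinate. *)
Section Classical.
Variable F : fieldType.

Definition cl_point := (option F * F)%type.

Definition cl_par (p q : cl_point) : Prop := p.1 = q.1.

Definition cl_circle (a b c : F) (p : cl_point) : Prop :=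
  match p.1 with
  | Some x => p.2 = a * x ^+ 2 + b * x + c
  | None => p.2 = a
  end.

Definition cl_circles (K : cl_point -> Prop) : Prop :=
  exists a b c, K = cl_circle a b c.

End Classical.

Definition iso_classical (P : Type) (C : (P -> Prop) -> Prop)
    (par : P -> P -> Prop) (F : fieldType) (f : P -> cl_point F) : Prop :=
  bijective f /\
  (forall p q, par p q <-> cl_par (f p) (f q)) /\
  (forall K : P -> Prop, C K <-> cl_circles (fun z => exists p, K p /\ f p = z)).

Definition plane_char (P : Type) (C : (P -> Prop) -> Prop)
    (par : P -> P -> Prop) (n : nat) : Prop :=
  exists (F : fieldType) (f : P -> cl_point F),
    (n \in [pchar F])%R /\ iso_classical C par f.

(* Main.v *)
Require Import Defs.
From mathcomp Require Import all_boot all_algebra.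
From mathcomp Require Import ring.
From Stdlib Require Import FunctionalExtensionality PropExtensionality Classical.

Section Aux.
Import GRing.Theory.
Local Open Scope ring_scope.
Variable F : fieldType.
Hypothesis two0 : (2%:R : F) = 0.

Lemma circ_eq_b (a b c a' b' c' : F) :
  (forall z, cl_circle a b c z <-> cl_circle a' b' c' z) -> b = b'.
Proof.
move=> H.
have h1 : a = a' by have := proj1 (H (None, a)); rewrite /cl_circle /=; apply.
have h0 : c = c'.
  have := proj1 (H (Some 0, c)); rewrite /cl_circle /= => h.
  have : c = a' * 0 ^+ 2 + b' * 0 + c' by apply: h; ring.
  move=> ->; ring.
have := proj1 (H (Some 1, a + b + c)); rewrite /cl_circle /= => h.
have e : a + b + c = a' * 1 ^+ 2 + b' * 1 + c' by apply: h; ring.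
subst a' c'; rewrite expr1n !mulr1 in e.
by move/addIr/addrI: e.
Qed.

Lemma tang_b (a b c a' b' c' : F) z0 :
  cl_circle a b c z0 -> cl_circle a' b' c' z0 ->
  (forall z, cl_circle a b c z -> cl_circle a' b' c' z -> z = z0) -> b = b'.
Proof.
move=> H1 H2 U.
case: (eqVneq b b') => // nb; exfalso.
have db : b - b' != 0 by rewrite subr_eq0.
case: (eqVneq a a') => [ea | na].
  subst a'.
  pose x := (c' - c) / (b - b').
  have e1 := U (None, a) erefl erefl.
  have e2 := U (Some x, a * x ^+ 2 + b * x + c) erefl.
  have : (Some x, a * x ^+ 2 + b * x + c) = z0.
    apply: e2; rewrite /cl_circle /=.
    rewrite /x; field; exact: db.
  by rewrite -e1.
have da : a - a' != 0 by rewrite subr_eq0.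
move: H1 H2 U; case: z0 => [[x0|] y0]; rewrite /cl_circle /=; last first.
  by move=> -> ea; rewrite ea eqxx in na.
move=> -> E U.
pose x1 := x0 + (b - b') / (a - a').
have := U (Some x1, a * x1 ^+ 2 + b * x1 + c) erefl.
have key : a * x1 ^+ 2 + b * x1 + c - (a' * x1 ^+ 2 + b' * x1 + c') =
   (a * x0 ^+ 2 + b * x0 + c - (a' * x0 ^+ 2 + b' * x0 + c')) +
   2%:R * ((a - a') * x0 * ((b - b') / (a - a')) + (b - b') * ((b - b') / (a - a'))).
  rewrite /x1; field; exact: da.
rewrite two0 mul0r addr0 E subrr in key.
move/eqP: key; rewrite subr_eq0 => /eqP key.
move=> /(_ key) [] /eqP; rewrite /x1 -subr_eq0 addrAC subrr add0r mulf_eq0 invr_eq0.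
by rewrite (negPf da) (negPf db).
Qed.

Lemma b_eq_tang (a b c a' c' : F) z0 z :
  cl_circle a b c z0 -> cl_circle a' b c' z0 -> ~ (a = a' /\ c = c') ->
  cl_circle a b c z -> cl_circle a' b c' z -> z = z0.
Proof.
case: z0 => [[x0|] y0]; case: z => [[x|] y]; rewrite /cl_circle /=.
- move=> -> E0 nac -> E.
  have hc : a = a' -> c = c'.
    move=> ea; subst a'; exact: addrI E0.
  have da : a - a' != 0.
    by rewrite subr_eq0; apply/eqP => ea; apply: nac; split => //; apply: hc.
  have s : (a - a') * (x ^+ 2 - x0 ^+ 2) = 0.
    have -> : (a - a') * (x ^+ 2 - x0 ^+ 2) =
      (a * x ^+ 2 + b * x + c - (a' * x ^+ 2 + b * x + c')) -
      (a * x0 ^+ 2 + b * x0 + c - (a' * x0 ^+ 2 + b * x0 + c')) by ring.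
    by rewrite -E -E0 !subrr.
  move/eqP: s; rewrite mulf_eq0 (negPf da) /= => /eqP s.
  have q : (x - x0) ^+ 2 = 0.
    have -> : (x - x0) ^+ 2 = (x ^+ 2 - x0 ^+ 2) + 2%:R * (x0 ^+ 2 - x * x0) by ring.
    by rewrite s two0 mul0r addr0.
  move/eqP: q; rewrite expf_eq0 /= subr_eq0 => /eqP ->; done.
- move=> -> E0 nac -> ea; exfalso; apply: nac; split => //.
  subst a'; exact: addrI E0.
- move=> -> ea nac -> E; exfalso; apply: nac; split => //.
  subst a'; exact: addrI E.
- by move=> -> _ _ ->.
Qed.

End Aux.

Lemma circ_of (P : Type) (C : (P -> Prop) -> Prop) (par : P -> P -> Prop)
  (F : fieldType) (f : P -> cl_point F) :
  iso_classical C par f -> forall K, C K ->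
  exists a b c, forall x, K x <-> cl_circle a b c (f x).
Proof.
move=> [bij [_ HC]] K HK.
have [a [b [c E]]] := proj1 (HC K) HK.
exists a, b, c => x; split.
  by move=> Kx; rewrite -E; exists x.
move=> h; have : exists p, K p /\ f p = f x by move: h; rewrite -E.
by move=> [p [Kp /(bij_inj bij) <-]].
Qed.

Theorem proposition1p1 (P : Type) (C : (P -> Prop) -> Prop)
    (par : P -> P -> Prop) :
  laguerre_plane C par -> miquelian C par -> plane_char C par 2 ->
  forall (K L M : P -> Prop) (p : P),
    C K -> C L -> C M -> K p -> L p ->
    tangent K M -> tangent L M -> tangent_at K L p.
Proof.
move=> _ _ [F [f [ch iso]]] K L M p CK CL CM Kp Lp TK TL.
have two0 : (2%:R : F)%R = 0%R := GRing.pcharf0 ch.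
have [bij _] := iso.
have [g fg gf] := bij.
have [aK [bK [cK EK]]] := @circ_of _ _ _ _ _ iso _ CK.
have [aL [bL [cL EL]]] := @circ_of _ _ _ _ _ iso _ CL.
have [aM [bM [cM EM]]] := @circ_of _ _ _ _ _ iso _ CM.
have tb : forall N a b c, (forall x, N x <-> cl_circle a b c (f x)) ->
    tangent N M -> b = bM.
  move=> N a b c EN [q [Nq [Mq [NM | U]]]].
    apply: (@circ_eq_b F a b c aM bM cM) => z.
    rewrite -(gf z) -EN -EM NM; done.
  apply: (@tang_b F two0 a b c aM bM cM (f q)).
  - exact/EN.
  - exact/EM.
  move=> z h1 h2; rewrite -(gf z); congr f; apply: U.
  by split; [apply/EN; rewrite gf | apply/EM; rewrite gf].
have bKM := tb _ _ _ _ EK TK.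
have bLM := tb _ _ _ _ EL TL.
subst bK bL.
split => //; split => //.
case: (classic (aK = aL /\ cK = cL)) => [[ea ec] | nac].
  left; apply: functional_extensionality => x.
  apply: propositional_extensionality.
  by rewrite EK EL ea ec.
right => x [Kx Lx].
apply: (bij_inj bij).
apply: (@b_eq_tang F two0 aK bM cK aL cL) => //.
- exact/EK.
- exact/EL.
- exact/EK.
- exact/EL.
Qed.
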